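(* Fix an arbitrary execution of Algorithm $\mathrm{tree}(G)$ on $G$, and let $r$, $U$ and $F$ be as defined in the context. If $uv$ is an edge of $G$ with $u\in U$ and $d_F(v)=1$, then $r(u)>r(v)$.
   Context: $G$ is a finite connected simple undirected graph containing a vertex $a$ with $d_G(a)\ge 2$. For a subtree $T$ of $G$ and a vertex $u$ of $T$: - $V_T(u)$ is the set of vertices $v\in V(G)\setminus V(T)$ with $uv\in E(G)$. - $E_T(u)$ is the set of edges $uv$ of $G$ with $v\in V_T(u)$. - If $|V_T(u)|=1$, then $v_T(u)$ denotes the unique vertex of $V_T(u)$. Three sets of vertices of $T$ are defined: - $W_2(T)=\{u\in V(T): |V_T(u)|\ge 2\}$. - $W_1(T)=\{u\in V(T): |V_T(u)|=1,\ |V_{T\cup E_T(u)}(v_T(u))|\ge 2\}$. - $W_0(T)=\{u\in V(T): |V_T(u)|=1,\ |V_{T\cup E_T(u)}(v_T(u))|\le 1\}$. Algorithm $\mathrm{tree}(G)$ runs as follows. 1. Start with $T=\{a\}$. 2. While $V(T)\ne V(G)$: - If $W_2(T)\ne\emptyset$, pick an arbitrary $u\in W_2(T)$. - Else, if $W_1(T)\neq\emptyset$, pick an arbitrary $u\in W_1(T)$. - Else, let $u$ be the vertex of $W_0(T)$ that joined $V(T)$ most recently. - Set $T:=T\cup E_T(u)$ (''expand $T$ at $u$''). 3. Return $T$. Now fix an execution and let $T$ be the returned spanning tree, rooted at $a$. For $v\ne a$, let $p(v)$ be the parent of $v$ in $T$. For each vertex $u$ with $d_T(u)\ge 2$, let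 $T_u$ be the tree just before the (unique) expansion at $u$. The rank $r:V(G)\to\mathbb{Z}$ is defined by $r(a)=1$ and, for each edge $uv$ of $T$ with $u=p(v)$: - $r(v)=r(u)$ if $u\in W_2(T_u)$; - $r(v)=1+\max_{w\in V(T_u)} r(w)$ otherwise. $U$ is the set of vertices $v$ such that no other vertex has rank $r(v)$. $F$ is the spanning forest obtained from $T$ by deleting every edge $uv$ with $r(u)\ne r(v)$, and $d_F(v)$ denotes the degree of $v$ in $F$. *)

(* Defs.v *)
From mathcomp Require Import all_boot.
Set Implicit Arguments. Unset Strict Implicit. Unset Printing Implicit Defensive.

(* A subtree T grown by Algorithm tree(G) is determined by its vertex set V
   (edges are recorded through the sequence of expansions). *)
Section TreeAlg.
Variables (T : finType) (e : rel T).

Definition Vout (V : {set T}) (u : T) : {set T} := [set v | e u v & v \notin V].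

Definition expand (V : {set T}) (u : T) : {set T} := V :|: Vout V u.

Definition W2 (V : {set T}) : {set T} := [set u in V | 1 < #|Vout V u|].
Definition W1 (V : {set T}) : {set T} :=
  [set u in V | (#|Vout V u| == 1)
                && [exists v in Vout V u, 1 < #|Vout (expand V u) v|]].
Definition W0 (V : {set T}) : {set T} :=
  [set u in V | (#|Vout V u| == 1)
                && [forall v in Vout V u, #|Vout (expand V u) v| <= 1]].

Definition rank_step (V : {set T}) (r : T -> nat) (u : T) : T -> nat :=
  fun v => if v \in Vout V u then
             (if u \in W2 V then r u else (\max_(w in V) r w).+1)
           else r v.

Definition step (st : {set T} * (T -> nat)) (u : T) : {set T} * (T -> nat) :=
  (expand st.1 u, rank_step st.1 st.2 u).

(* state after performing the expansions listed in s, starting from T = {a},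
   r(a) = 1 (values of r outside the current tree are irrelevant dummies) *)
Definition run (a : T) (s : seq T) := foldl step ([set a], fun _ => 1) s.

Definition tree_verts (a : T) (s : seq T) (i : nat) : {set T} :=
  (run a (take i s)).1.

Definition rank (a : T) (s : seq T) : T -> nat := (run a s).2.

(* the i-th expansion (at u = nth a s i) obeys the rules of tree(G).
   "u joined V(T) most recently among W0" : every w ∈ W0 was already in the
   tree at every earlier stage j ≤ i at which u was. *)
Definition valid_choice (a : T) (s : seq T) (i : nat) : Prop :=
  let V := tree_verts a s i in
  let u := nth a s i in
  V != setT /\
  (if W2 V != set0 then is_true (u \in W2 V)
   else if W1 V != set0 then is_true (u \in W1 V)
   else u \in W0 V /\
        (forall w, w \in W0 V -> forall j, j <= i ->
            u \in tree_verts a s j -> w \in tree_verts a s j)).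

Definition execution (a : T) (s : seq T) : Prop :=
  (forall i, i < size s -> valid_choice a s i) /\
  tree_verts a s (size s) = setT.

Definition tree_edge (a : T) (s : seq T) (x y : T) : bool :=
  [exists i : 'I_(size s),
     ((x == nth a s i) && (y \in Vout (tree_verts a s i) (nth a s i)))
  || ((y == nth a s i) && (x \in Vout (tree_verts a s i) (nth a s i)))].

Definition unique_rank (a : T) (s : seq T) (u : T) : Prop :=
  forall w, w != u -> rank a s w != rank a s u.

Definition degF (a : T) (s : seq T) (v : T) : nat :=
  #|[set w | tree_edge a s v w && (rank a s w == rank a s v)]|.

End TreeAlg.

(* Main.v *)
Require Import Defs.
From mathcomp Require Import all_boot.
Set Implicit Arguments. Unset Strict Implicit. Unset Printing Implicit Defensive.

Lemma inW2 (T : finType) (e : rel T) V x :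
  (x \in W2 e V) = (x \in V) && (1 < #|Vout e V x|).
Proof. by rewrite /W2 inE. Qed.
Lemma inW1 (T : finType) (e : rel T) V x :
  (x \in W1 e V) = (x \in V) && ((#|Vout e V x| == 1)
                && [exists v in Vout e V x, 1 < #|Vout e (expand e V x) v|]).
Proof. by rewrite /W1 inE. Qed.
Lemma inW0 (T : finType) (e : rel T) V x :
  (x \in W0 e V) = (x \in V) && ((#|Vout e V x| == 1)
                && [forall v in Vout e V x, #|Vout e (expand e V x) v| <= 1]).
Proof. by rewrite /W0 inE. Qed.
Lemma inVout (T : finType) (e : rel T) V x y :
  (y \in Vout e V x) = e x y && (y \notin V).
Proof. by rewrite /Vout inE. Qed.

Lemma Vout_sub (T : finType) (e : rel T) (V V' : {set T}) x :
  V \subset V' -> Vout e V' x \subset Vout e V x.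
Proof.
move=> sub; apply/subsetP => y; rewrite !inVout => /andP [-> hy] /=.
by apply/negP => hyV; move/negP: hy; apply; apply: (subsetP sub).
Qed.

Lemma st_succ (T : finType) (e : rel T) a s i : i < size s ->
  run e a (take i.+1 s) = step e (run e a (take i s)) (nth a s i).
Proof. by move=> hi; rewrite /run (take_nth a hi) foldl_rcons. Qed.

Lemma V_succ (T : finType) (e : rel T) a s i : i < size s ->
  tree_verts e a s i.+1 = expand e (tree_verts e a s i) (nth a s i).
Proof. by move=> hi; rewrite /tree_verts st_succ. Qed.

Lemma V_big (T : finType) (e : rel T) a s i : size s <= i ->
  tree_verts e a s i = tree_verts e a s (size s).
Proof. by move=> hi; rewrite /tree_verts take_oversize // take_size. Qed.

Lemma V0 (T : finType) (e : rel T) a s : tree_verts e a s 0 = [set a].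
Proof. by rewrite /tree_verts take0. Qed.

Lemma V_step (T : finType) (e : rel T) a s i :
  tree_verts e a s i \subset tree_verts e a s i.+1.
Proof.
case: (ltnP i (size s)) => hi.
  by rewrite V_succ // /expand subsetUl.
by rewrite !V_big // (leq_trans hi).
Qed.

Lemma V_mono (T : finType) (e : rel T) a s i k : i <= k ->
  tree_verts e a s i \subset tree_verts e a s k.
Proof.
move/subnK => <-; elim: (k - i) => [|d IH] //=.
by apply: subset_trans IH (V_step _ _ _ _).
Qed.

Lemma R_stable (T : finType) (e : rel T) a s i d x :
  x \in tree_verts e a s i ->
  (run e a (take (d + i) s)).2 x = (run e a (take i s)).2 x.
Proof.
move=> hx; elim: d => [|d IH] //=.
case: (ltnP (d + i) (size s)) => hi.
  rewrite addSn st_succ //= /rank_step.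
  have hx' : x \in tree_verts e a s (d + i) by apply: (subsetP (V_mono _ _ _ (leq_addl d i))).
  by rewrite inVout hx' andbF.
rewrite -IH addSn (take_oversize hi) take_oversize //.
exact: (leq_trans hi).
Qed.

Lemma rank_eq (T : finType) (e : rel T) a s i x :
  x \in tree_verts e a s i -> rank e a s x = (run e a (take i s)).2 x.
Proof.
move=> hx; rewrite -(R_stable (size s) hx) /rank take_oversize //.
exact: leq_addr.
Qed.

Lemma child_rank (T : finType) (e : rel T) a s i w : i < size s ->
  nth a s i \in tree_verts e a s i ->
  w \in Vout e (tree_verts e a s i) (nth a s i) ->
  rank e a s w = if nth a s i \in W2 e (tree_verts e a s i)
                 then rank e a s (nth a s i)
                 else (\max_(x in tree_verts e a s i) rank e a s x).+1.
Proof.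
move=> hi hu hw.
have hw1 : w \in tree_verts e a s i.+1 by rewrite V_succ // /expand inE hw orbT.
rewrite (rank_eq hw1) st_succ //= /rank_step.
rewrite -/(tree_verts e a s i) hw (rank_eq hu).
congr (if _ then _ else _.+1); apply: eq_bigr => x hx; by rewrite (rank_eq hx).
Qed.

Lemma chosen_in (T : finType) (e : rel T) a s i :
  valid_choice e a s i -> nth a s i \in tree_verts e a s i.
Proof.
case=> _; case: ifP => _; first by rewrite inW2 => /andP [].
case: ifP => _; first by rewrite inW1 => /andP [].
by case; rewrite inW0 => /andP [].
Qed.

Lemma join_uniq (T : finType) (e : rel T) a s i k w :
  i < size s -> k < size s ->
  w \in Vout e (tree_verts e a s i) (nth a s i) ->
  w \in Vout e (tree_verts e a s k) (nth a s k) -> i = k.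
Proof.
move=> hi hk hwi hwk.
have in1 : forall m, m < size s -> w \in Vout e (tree_verts e a s m) (nth a s m) ->
   (w \in tree_verts e a s m.+1) && (w \notin tree_verts e a s m).
  by move=> m hm hw; rewrite V_succ // /expand inE hw orbT; rewrite inVout in hw; case/andP: hw.
case/andP: (in1 _ hi hwi) => hi1 hi2; case/andP: (in1 _ hk hwk) => hk1 hk2.
case: (ltngtP i k) => // h.
  by move/negP: hk2; case; apply: (subsetP (V_mono _ _ _ h)).
by move/negP: hi2; case; apply: (subsetP (V_mono _ _ _ h)).
Qed.

Unset Implicit Arguments.
Theorem lemma4 (T : finType) (e : rel T) (a : T) (s : seq T)
  (e_sym : symmetric e) (e_irr : irreflexive e)
  (e_conn : forall x y : T, connect e x y)
  (deg_a : 1 < #|[set v | e a v]|)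
  (exec : execution e a s)
  (u v : T) (huv : e u v) (hU : unique_rank e a s u) (hF : degF e a s v = 1) :
  rank e a s v < rank e a s u.
Proof.
case: exec => hval hfin.
have vu : v != u by apply/eqP => h; rewrite h e_irr in huv.
rewrite ltnNge; apply/negP => hle.
have hlt : rank e a s u < rank e a s v.
  by rewrite ltn_neqAle hle andbT eq_sym (hU v vu).
have hmax : forall i x, x \in tree_verts e a s i ->
    rank e a s x <= \max_(y in tree_verts e a s i) rank e a s y.
  by move=> i x hx; rewrite (bigD1 x) /= ?leq_maxl.
have W2bad : forall i, i < size s -> nth a s i \in W2 e (tree_verts e a s i) ->
    rank e a s (nth a s i) = rank e a s u -> False.
  move=> i hi hW hr.
  have hin := chosen_in (hval i hi).
  have [x [y [hx hy xy]]] : exists x y, [/\ x \in Vout e (tree_verts e a s i) (nth a s i),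
      y \in Vout e (tree_verts e a s i) (nth a s i) & x != y].
    by apply/card_gt1P; rewrite inW2 in hW; case/andP: hW.
  have [w [hw wu]] : exists w, w \in Vout e (tree_verts e a s i) (nth a s i) /\ w != u.
    case: (eqVneq x u) => [xu|]; last by exists x.
    by exists y; split=> //; rewrite -xu eq_sym.
  move/negP: (hU w wu); apply; apply/eqP.
  by rewrite (child_rank hi hin hw) hW hr.
have degbad : forall k, k < size s -> nth a s k \notin W2 e (tree_verts e a s k) ->
    v \in Vout e (tree_verts e a s k) (nth a s k) -> False.
  move=> k hk hkW hvk.
  have hkin := chosen_in (hval k hk).
  have hrv : rank e a s v = (\max_(x in tree_verts e a s k) rank e a s x).+1.
    by rewrite (child_rank hk hkin hvk) (negbTE hkW).
  move: hF; rewrite /degF.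
  set S := [set w | _].
  move/eqP/cards1P => [w0 hS].
  have : w0 \in S by rewrite hS set11.
  rewrite inE => /andP [/existsP [i /orP [/andP [/eqP hv hw] | /andP [/eqP hw hv]]] /eqP hr].
  - have hi := ltn_ord i.
    have vin : v \in tree_verts e a s i by rewrite hv; apply: chosen_in (hval i hi).
    move: hr; rewrite (child_rank hi (chosen_in (hval i hi)) hw) -hv.
    case: ifP => hW2 hr.
      have sub : Vout e (tree_verts e a s i) v \subset S.
        apply/subsetP => w hw'; rewrite inE; apply/andP; split.
          by apply/existsP; exists i; rewrite -hv eqxx hw'.
        by rewrite (child_rank hi (chosen_in (hval i hi)) (w:=w)) -hv ?hW2 //.
      move: (subset_leq_card sub); rewrite hS cards1.
      by rewrite inW2 in hW2; case/andP: hW2 => _ h1 h2; move: (leq_trans h1 h2).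
    by move: (hmax _ _ vin); rewrite -hr ltnn.
  - have hi := ltn_ord i.
    have ik := join_uniq hi hk hv hvk.
    move: hr; rewrite hw ik => hr.
    by move: (hmax _ _ hkin); rewrite hr hrv ltnn.

have uin : u \in tree_verts e a s (size s) by rewrite hfin inE.
have exP : exists i, u \in tree_verts e a s i by exists (size s).
case: (ex_minnP exP) => i0 hi0 hmin.
case: i0 hi0 hmin => [|j] hi0 hmin.
-
  rewrite V0 inE in hi0; move/eqP: hi0 => ua.
  have hs : 0 < size s.
    rewrite lt0n; apply/negP => /eqP hs0.
    have : v \in tree_verts e a s (size s) by rewrite hfin inE.
    by rewrite hs0 V0 inE -ua (negbTE vu).
  have aW2 : a \in W2 e (tree_verts e a s 0).
    rewrite inW2 V0 set11 /=.
    suff -> : Vout e [set a] a = [set v | e a v] by [].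
    apply/setP => x; rewrite inVout !inE.
    by case: (eqVneq x a) => [->|]; rewrite ?e_irr ?andbT.
  case: (hval 0 hs) => _; case: ifP => [_ h0|]; last first.
    by move/negbT; rewrite negbK => /eqP h; rewrite h inE in aW2.
  have : nth a s 0 \in [set a] by rewrite -(V0 e a s); rewrite inW2 in h0; case/andP: h0.
  rewrite inE => /eqP h0a.
  by apply: (W2bad 0 hs h0); rewrite h0a ua.
- have unj : u \notin tree_verts e a s j.
    by apply/negP => h; move: (hmin j h); rewrite ltnn.
  have hj : j < size s.
    rewrite ltnNge; apply/negP => h; move/negP: unj; apply.
    by rewrite V_big // hfin inE.
  set p := nth a s j.
  have pin : p \in tree_verts e a s j := chosen_in (hval j hj).
  have upj : u \in Vout e (tree_verts e a s j) p.
    by move: hi0; rewrite V_succ // /expand inE (negbTE unj).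
  have hru := child_rank hj pin upj.
  case hp2 : (p \in W2 e (tree_verts e a s j)).
    by apply: (W2bad j hj hp2); rewrite hru hp2.
  rewrite hp2 in hru.
  case: (hval j hj) => _; case: ifP => [_ hp|hW2 vc]; first by rewrite /p hp in hp2.
  move/negbT: hW2; rewrite negbK => /eqP W2e.
  have card1 : #|Vout e (tree_verts e a s j) p| = 1.
    move: vc; case: ifP => _; first by rewrite inW1 => /and3P [_ /eqP].
    by case=> + _; rewrite inW0 => /and3P [_ /eqP].
  have Voutp : Vout e (tree_verts e a s j) p = [set u].
    move/eqP/cards1P: card1 => [x hx]; move: upj; rewrite hx inE => /eqP ->//.
  have hV' : tree_verts e a s j.+1 = tree_verts e a s j :|: [set u].
    by rewrite V_succ // /expand Voutp.
  case vj : (v \in tree_verts e a s j).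
    by move: (hmax _ _ vj); rewrite -ltnS -hru => h; move: (ltn_trans h hlt); rewrite ltnn.
  have vj1 : v \notin tree_verts e a s j.+1 by rewrite hV' !inE vj.
  have hj1 : j.+1 < size s.
    rewrite ltnNge; apply/negP => h; move/negP: vj1; apply.
    by rewrite V_big // hfin inE.
  have vout : v \in Vout e (tree_verts e a s j.+1) u by rewrite inVout huv vj1.
  have uin1 : u \in tree_verts e a s j.+1 by rewrite hV' !inE eqxx orbT.
  have notW2 : forall z, z \in tree_verts e a s j -> #|Vout e (tree_verts e a s j) z| <= 1.
    move=> z hz; rewrite leqNgt; apply/negP => h.
    have : z \in W2 e (tree_verts e a s j) by rewrite inW2 hz h.
    by rewrite W2e inE.
  have sub1 : tree_verts e a s j \subset tree_verts e a s j.+1 by rewrite hV' subsetUl.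
  have W2sub : forall z, z \in W2 e (tree_verts e a s j.+1) -> z = u.
    move=> z; rewrite inW2 hV' in_setU in_set1 => /andP [/orP [hz|/eqP //] h].
    move: (notW2 z hz) (subset_leq_card (Vout_sub e z sub1)); rewrite hV'.
    by move=> h1 h2; move: (leq_ltn_trans (leq_trans h2 h1) h); rewrite ltnn.
  case: (hval j.+1 hj1) => _.
  move: vc; case: ifP => hW1 vc.
  +
    move: vc; rewrite inW1 => /and3P [_ _ /exists_inP [x hx hx2]].
    move: hx; rewrite Voutp inE => /eqP xu; rewrite xu -/(tree_verts e a s j.+1) in hx2.
    have uW2 : u \in W2 e (tree_verts e a s j.+1) by rewrite inW2 uin1 V_succ //.
    case: ifP => [_ hc|]; last by move/negbT; rewrite negbK => /eqP h; rewrite h inE in uW2.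
    by apply: (W2bad j.+1 hj1 hc); rewrite (W2sub _ hc).
  + move/negbT: hW1; rewrite negbK => /eqP W1e.
    move: vc => [+ _]; rewrite inW0 => /and3P [_ _ /forall_inP hall].
    have c1 : #|Vout e (tree_verts e a s j.+1) u| <= 1.
      rewrite V_succ //; apply: hall; by rewrite Voutp set11.
    have c1' : #|Vout e (tree_verts e a s j.+1) u| = 1.
      by apply/eqP; rewrite eqn_leq c1 card_gt0; apply/set0Pn; exists v.
    have uW2 : u \notin W2 e (tree_verts e a s j.+1) by rewrite inW2 c1' ltnn andbF.
    have W2e' : W2 e (tree_verts e a s j.+1) = set0.
      apply/setP => z; rewrite [RHS]inE; apply: negbTE; apply/negP => hz.
      by move: (W2sub z hz) => zu; rewrite -zu hz in uW2.
    move=> vc2.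
    have cu : nth a s j.+1 = u; last first.
      by apply: (degbad j.+1 hj1); rewrite cu.
    move: vc2; case: ifP => [hne|_]; first by rewrite W2e' eqxx in hne.
    have cin := chosen_in (hval j.+1 hj1).
    case: ifP => [_ hc | hW1' [hc hrec]].
    * apply/eqP; apply/negPn/negP => cu.
      have hcj : nth a s j.+1 \in tree_verts e a s j.
        by move: cin; rewrite hV' in_setU in_set1 (negbTE cu) orbF.
      move: hc; rewrite inW1 => /and3P [_ /eqP hc1 /exists_inP [x hx hx2]].
      have le1 := notW2 _ hcj.
      have sb := Vout_sub e (nth a s j.+1) sub1.
      have ceq : #|Vout e (tree_verts e a s j.+1) (nth a s j.+1)| =
                 #|Vout e (tree_verts e a s j) (nth a s j.+1)|.
        apply/eqP; rewrite eqn_leq (subset_leq_card sb) hc1.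
        by move: (subset_leq_card sb); rewrite hc1 => h; rewrite (leq_trans le1).
      have eqi := subset_cardP ceq sb.
      have : nth a s j.+1 \in W1 e (tree_verts e a s j).
        rewrite inW1 hcj -ceq hc1 eqxx /=; apply/exists_inP; exists x; first by rewrite -eqi.
        apply: (leq_trans hx2); apply: subset_leq_card; apply: Vout_sub.
        rewrite /expand; apply: setUSS => //.
        by apply/subsetP => y; rewrite eqi.
      by rewrite W1e inE.
    * move/negbT: hW1'; rewrite negbK => /eqP W1e'.
      have uW0 : u \in W0 e (tree_verts e a s j.+1).
        rewrite inW0 uin1 c1' eqxx /=; apply/forall_inP => x hx; rewrite leqNgt; apply/negP => hx2.
        have : u \in W1 e (tree_verts e a s j.+1).
          by rewrite inW1 uin1 c1' eqxx /=; apply/exists_inP; exists x.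
        by rewrite W1e' inE.
      have ncj : nth a s j.+1 \notin tree_verts e a s j.
        by apply/negP => h; move: (hrec u uW0 j (leqnSn j) h); rewrite (negbTE unj).
      by move: cin; rewrite hV' in_setU (negbTE ncj) in_set1 => /eqP.
Qed.
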